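(* Let $\mathcal{H}$ be a finite-dimensional Hilbert space and let $\Phi:\mathcal{B}(\mathcal{H})\to\mathcal{B}(\mathcal{H})$ be a unital quantum channel (completely positive, trace-preserving, with $\Phi(\mathbb{1})=\mathbb{1}$). Let $\rho_{\text{in}}=\sum_{i=1}^{r}p_i|p_i\rangle\langle p_i|$ be a density matrix on $\mathcal{H}$ of rank $r$, where $\{|p_i\rangle\}_{i=1}^r$ are orthonormal, $0<p_i\leq1$, $\sum_{i=1}^r p_i=1$, and let $\rho_{\text{out}}=\Phi(\rho_{\text{in}})$. Let $\Delta S\equiv S(\rho_{\text{out}})-S(\rho_{\text{in}})$ and $$L_{\text{otm}}\equiv-\ln\Big(\sum_{i=1}^{r}e^{-C(\Phi(|p_i\rangle\langle p_i|),\rho_{\text{out}})}\Big).$$ Then $\Delta S\geq L_{\text{otm}}\geq 0$.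
   Context: $\mathcal{B}(\mathcal{H})$ denotes the set of density matrices on $\mathcal{H}$ and $\mathbb{1}$ the identity on $\mathcal{H}$. $S(\rho)\equiv-\mathrm{Tr}[\rho\ln\rho]$ is the von Neumann entropy. $C(\rho_1,\rho_2)\equiv-\mathrm{Tr}[\rho_1\ln\rho_2]$ is the quantum cross entropy of $\rho_1$ with respect to $\rho_2$; it is finite when $\mathrm{supp}(\rho_1)\subseteq\mathrm{supp}(\rho_2)$ (with $\ln\rho_2$ taken on the support of $\rho_2$) and $+\infty$ otherwise. *)

(* Defs.v *)
From HB Require Import structures.
From mathcomp Require Import all_boot all_order all_algebra.
From mathcomp Require Import sesquilinear spectral.
From mathcomp Require Import complex mxtens.
From mathcomp Require Import all_classical all_reals.
From mathcomp Require Import exp.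

Set Implicit Arguments.
Unset Strict Implicit.
Unset Printing Implicit Defensive.

Import Order.TTheory GRing.Theory Num.Theory.
Local Open Scope ring_scope.
Local Open Scope sesquilinear_scope.

Section QDefs.
Variable R : realType.
Local Notation C := R[i].
Local Notation toC := (real_complex R).

Definition psdmx m (A : 'M[C]_m) : Prop :=
  A ^t* = A /\ forall v : 'rV[C]_m, 0 <= (v *m A *m v ^t*) 0 0.

Definition density m (A : 'M[C]_m) : Prop := psdmx A /\ \tr A = 1.

(* the ampliation id_k (x) Phi acting on 'M_(k*n), viewed as k x k blocks
   of n x n matrices *)
Definition ampl n k (Phi : 'M[C]_n -> 'M[C]_n) (X : 'M[C]_(k * n)) : 'M[C]_(k * n) :=
  \matrix_(u, w) Phi (\matrix_(a, b)
        X (mxtens_index ((mxtens_unindex u).1, a))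
          (mxtens_index ((mxtens_unindex w).1, b)))
      (mxtens_unindex u).2 (mxtens_unindex w).2.

Definition completely_positive n (Phi : 'M[C]_n -> 'M[C]_n) : Prop :=
  forall k (X : 'M[C]_(k * n)), psdmx X -> psdmx (ampl Phi X).

Definition trace_preserving n (Phi : 'M[C]_n -> 'M[C]_n) : Prop :=
  forall X, \tr (Phi X) = \tr X.

Definition quantum_channel n (Phi : {linear 'M[C]_n -> 'M[C]_n}) : Prop :=
  completely_positive Phi /\ trace_preserving Phi.

Definition unital n (Phi : 'M[C]_n -> 'M[C]_n) : Prop := Phi 1%:M = 1%:M.

(* matrix logarithm of a Hermitian (PSD) matrix via its spectral
   decomposition A = P^-1 diag(mu) P; analysis' ln satisfies ln 0 = 0, so
   this is ln A taken on the support of A (and 0 on its kernel). *)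
Definition mxln n (A : 'M[C]_n) : 'M[C]_n :=
  invmx (spectralmx A) *m
  diag_mx (map_mx (fun z => toC (ln (complex.Re z))) (spectral_diag A))
  *m spectralmx A.

Definition vN_entropy n (rho : 'M[C]_n) : R :=
  - complex.Re (\tr (rho *m mxln rho)).

(* support inclusion supp(A) <= supp(B): column space of A inside that of B *)
Definition supp_sub n (A B : 'M[C]_n) : bool := (A^T <= B^T)%MS.

Definition cross_entropy n (rho1 rho2 : 'M[C]_n) : \bar R :=
  if supp_sub rho1 rho2 then (- complex.Re (\tr (rho1 *m mxln rho2)))%:E
  else +oo%E.

End QDefs.

(* Main.v *)
Set Warnings "-notation-overridden,-ambiguous-paths,-notation-incompatible-prefix,-deprecated".
Require Import Defs.
From HB Require Import structures.
From mathcomp Require Import all_boot all_order all_algebra.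
From mathcomp Require Import sesquilinear spectral.
From mathcomp Require Import complex mxtens.
From mathcomp Require Import all_classical all_reals.
From mathcomp Require Import exp.
From mathcomp Require Import ring lra.
Import Order.TTheory GRing.Theory Num.Theory.
Local Open Scope ring_scope.
Local Open Scope sesquilinear_scope.
Set Implicit Arguments.
Unset Strict Implicit.
Unset Printing Implicit Defensive.
Section Q.
Variable R : realType.
Local Notation C := R[i].
Local Notation toC := (real_complex R).
Local Notation expR := (@sequences.expR R).

Lemma ReD (x y : C) : complex.Re (x + y) = complex.Re x + complex.Re y.
Proof. by case: x; case: y. Qed.

Lemma Re_sum I (s : seq I) (P : pred I) (F : I -> C) :
  complex.Re (\sum_(i <- s | P i) F i) = \sum_(i <- s | P i) complex.Re (F i).
Proof. by apply: (big_morph _ ReD). Qed.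

Lemma Re_toCM (x : R) (y : C) : complex.Re (toC x * y) = x * complex.Re y.
Proof. by case: y => a b /=; rewrite !mul0r subr0. Qed.

Lemma ReN (x : C) : complex.Re (- x) = - complex.Re x.
Proof. by case: x. Qed.

Lemma Re_toC (x : R) : complex.Re (toC x) = x.
Proof. by []. Qed.

Lemma ge0C (z : C) : 0 <= z -> z = toC (complex.Re z) /\ 0 <= complex.Re z.
Proof.
case: z => a b; rewrite lecE /= => /andP[/eqP-> h]; split => //.
Qed.

Lemma toC_ge0 (x : R) : (0 <= toC x) = (0 <= x).
Proof. by rewrite lecE /= eqxx. Qed.

Definition quad m (v : 'rV[C]_m) (A : 'M[C]_m) : C := (v *m A *m v ^t*) 0 0.

Lemma entry_quad m k (M : 'M[C]_(m, k)) (N : 'M[C]_k) (j : 'I_m) :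
  (M *m N *m M ^t*) j j = quad (row j M) N.
Proof.
rewrite /quad !mxE; apply: eq_bigr => l _; rewrite !mxE; congr (_ * _).
by apply: eq_bigr => l' _; rewrite !mxE.
Qed.

Lemma quad_ge0_sum m (v : 'rV[C]_m) : 0 <= (v *m v ^t*) 0 0.
Proof.
rewrite mxE; apply: sumr_ge0 => j _; rewrite !mxE; exact: mul_conjC_ge0.
Qed.

Lemma psd_MMt m k (M : 'M[C]_(m, k)) : psdmx (M *m M ^t*).
Proof.
split.
  by rewrite trmx_mul map_mxM trmxCK.
move=> v; rewrite !mulmxA -mulmxA.
have -> : M ^t* *m v ^t* = (v *m M) ^t* by rewrite trmx_mul map_mxM.
exact: quad_ge0_sum.
Qed.

Lemma psdD m (A B : 'M[C]_m) : psdmx A -> psdmx B -> psdmx (A + B).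
Proof.
move=> [hA qA] [hB qB]; split.
  by rewrite linearD /= map_mxD hA hB.
move=> v; rewrite mulmxDr mulmxDl mxE; exact: addr_ge0.
Qed.

Lemma psdZ m (c : R) (A : 'M[C]_m) : 0 <= c -> psdmx A -> psdmx (toC c *: A).
Proof.
move=> c0 [hA qA]; split.
  rewrite linearZ /= map_mxZ hA; congr (_ *: _).
  by apply: conj_Creal; rewrite ger0_real // toC_ge0.
move=> v; rewrite -scalemxAr -scalemxAl mxE; apply: mulr_ge0 => //.
by rewrite toC_ge0.
Qed.

Lemma psd0 m : psdmx (0 : 'M[C]_m).
Proof. by split; [rewrite trmx0 map_mx0 | move=> v; rewrite mulmx0 mul0mx mxE]. Qed.

Lemma psd_sum m I (s : seq I) (F : I -> 'M[C]_m) :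
  (forall i, psdmx (F i)) -> psdmx (\sum_(i <- s) F i).
Proof.
move=> h; elim: s => [|a s IH]; first by rewrite big_nil; exact: psd0.
by rewrite big_cons; apply: psdD.
Qed.


Lemma unitary_tV m (U : 'M[C]_m) : U \is unitarymx -> U ^t* *m U = 1%:M.
Proof. by move=> hU; rewrite -[U ^t*]mul1mx mulmxKtV. Qed.

Lemma spec_dec m (A : 'M[C]_m) : A ^t* = A ->
  A = (spectralmx A) ^t* *m diag_mx (spectral_diag A) *m spectralmx A.
Proof.
move=> h.
have hn : A \is normalmx by apply/normalmxP; rewrite h.
by rewrite -invmx_unitary ?spectral_unitarymx //; apply/orthomx_spectralP.
Qed.

Lemma spec_conj m (A : 'M[C]_m) : A ^t* = A ->
  spectralmx A *m A *m (spectralmx A) ^t* = diag_mx (spectral_diag A).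
Proof.
move=> h; have hU := spectral_unitarymx A.
rewrite {2}(spec_dec h) !mulmxA (unitarymxP hU) mul1mx -mulmxA (unitarymxP hU).
by rewrite mulmx1.
Qed.

Lemma spec_diag_ge0 m (A : 'M[C]_m) k : psdmx A -> 0 <= spectral_diag A 0 k.
Proof.
move=> [h q]; have := congr1 (fun M : 'M[C]_m => M k k) (spec_conj h).
rewrite entry_quad mxE eqxx mulr1n => <-; exact: q.
Qed.

Lemma tr_diag m (M : 'M[C]_m) (e : 'rV[C]_m) :
  \tr (M *m diag_mx e) = \sum_k M k k * e 0 k.
Proof. by rewrite mul_mx_diag /mxtrace; apply: eq_bigr => k _; rewrite mxE. Qed.

Lemma tr_spec m (A X : 'M[C]_m) (g : C -> C) : 
  \tr (X *m (invmx (spectralmx A) *m diag_mx (map_mx g (spectral_diag A)) *m spectralmx A))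
  = \sum_k (spectralmx A *m X *m (spectralmx A) ^t*) k k * g (spectral_diag A 0 k).
Proof.
rewrite invmx_unitary ?spectral_unitarymx // !mulmxA mxtrace_mulC !mulmxA tr_diag.
by apply: eq_bigr => k _; congr (_ * _); rewrite mxE.
Qed.

Lemma psd_kernel m (A : 'M[C]_m) (v : 'rV[C]_m) :
  psdmx A -> quad v A = 0 -> v *m A = 0.
Proof.
move=> hA; have [h _] := hA; rewrite /quad (spec_dec h).
set U := spectralmx A; set d := spectral_diag A.
have hU : U \is unitarymx := spectral_unitarymx A.
set w := v *m U ^t*.
have -> : v *m (U ^t* *m diag_mx d *m U) *m v ^t* = w *m diag_mx d *m w ^t*.
  by rewrite /w trmx_mul map_mxM trmxCK !mulmxA.
have wE : w = v *m U ^t* by [].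
clearbody w.
rewrite mxE => /eqP; rewrite psumr_eq0; last first.
  move=> k _; rewrite mul_mx_diag !mxE mulrAC.
  by apply: mulr_ge0; [exact: mul_conjC_ge0 | exact: spec_diag_ge0].
move=> /allP H.
have wD : w *m diag_mx d = 0.
  apply/matrixP => i k; rewrite ord1 mul_mx_diag !mxE.
  have := H k (mem_index_enum k); rewrite implyTb mul_mx_diag !mxE.
  by rewrite mulf_eq0 conjC_eq0 => /orP[/eqP->|/eqP->]; rewrite ?mul0r.
by rewrite !mulmxA -wE wD !mul0mx.
Qed.


Lemma jensen_ln m (s mu : 'I_m -> R) : (forall k, 0 <= s k) -> (forall k, 0 <= mu k) ->
  (forall k, mu k = 0 -> s k = 0) -> \sum_k s k = 1 ->
  expR (\sum_k s k * ln (mu k)) <= \sum_k s k * mu k.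
Proof.
move=> s0 mu0 smu s1.
set M := \sum_k s k * mu k.
have M0 : 0 <= M by apply: sumr_ge0 => k _; apply: mulr_ge0.
have Mpos : 0 < M.
  rewrite lt_def M0 andbT; apply/negP => /eqP /psumr_eq0P H.
  have : \sum_k s k = 0.
    apply: big1 => k _.
    have := H (fun i _ => mulr_ge0 (s0 i) (mu0 i)) k isT.
    move=> /eqP; rewrite mulf_eq0 => /orP[/eqP//|/eqP].
    exact: smu.
  by rewrite s1 => /eqP; rewrite oner_eq0.
have key : \sum_k s k * (ln (mu k) - ln M) <= \sum_k s k * (mu k / M - 1).
  apply: ler_sum => k _; case: (eqVneq (s k) 0) => [->|sk0]; first by rewrite !mul0r.
  have muk : 0 < mu k.
    rewrite lt_def mu0 andbT; apply/eqP => e; move: sk0; rewrite smu // eqxx //.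
  apply: ler_wpM2l => //.
  rewrite -ln_div ?posrE //.
  have q : 0 < mu k / M by exact: divr_gt0.
  have := @le_ln1Dx _ (mu k / M - 1); rewrite [1 + _]addrC subrK.
  by apply; lra.
have e1 : \sum_k s k * (ln (mu k) - ln M) = \sum_k s k * ln (mu k) - ln M.
  under eq_bigr do rewrite mulrBr.
  by rewrite sumrB -mulr_suml s1 mul1r.
have e2 : \sum_k s k * (mu k / M - 1) = 0.
  under eq_bigr do rewrite mulrBr mulr1 mulrA.
  by rewrite sumrB -mulr_suml -/M divff ?s1 ?subrr // gt_eqF.
rewrite e1 e2 subr_le0 in key.
by rewrite -[X in _ <= X]lnK ?posrE // ler_expR.
Qed.


Lemma tr_specE m (A X : 'M[C]_m) (e : 'rV[C]_m) :
  \tr (X *m (invmx (spectralmx A) *m diag_mx e *m spectralmx A))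
  = \sum_k (spectralmx A *m X *m (spectralmx A) ^t*) k k * e 0 k.
Proof.
by rewrite invmx_unitary ?spectral_unitarymx // !mulmxA mxtrace_mulC !mulmxA tr_diag.
Qed.

Lemma tr_mxln m (A X : 'M[C]_m) :
  \tr (X *m mxln A) = \sum_k (spectralmx A *m X *m (spectralmx A) ^t*) k k *
     toC (ln (complex.Re (spectral_diag A 0 k))).
Proof. by rewrite /mxln tr_specE; apply: eq_bigr => k _; congr (_ * _); rewrite mxE. Qed.

Lemma tr_A m (A X : 'M[C]_m) : A ^t* = A ->
  \tr (X *m A) = \sum_k (spectralmx A *m X *m (spectralmx A) ^t*) k k * spectral_diag A 0 k.
Proof.
move=> h; rewrite [in LHS](spec_dec h) -[in LHS]invmx_unitary ?spectral_unitarymx //.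
exact: tr_specE.
Qed.

Definition cond m (A S : 'M[C]_m) := forall k, spectral_diag A 0 k = 0 ->
  row k (spectralmx A *m S) = 0.

Lemma cond_entry m (A S : 'M[C]_m) k j : cond A S -> spectral_diag A 0 k = 0 ->
  (spectralmx A *m S) k j = 0.
Proof.
move=> c dk; have := congr1 (fun M : 'rV[C]_m => M 0 j) (c k dk).
by rewrite !mxE.
Qed.

Lemma tr_unitary_conj m (U S : 'M[C]_m) : U \is unitarymx -> \tr (U *m S *m U ^t*) = \tr S.
Proof. by move=> hU; rewrite mxtrace_mulC mulmxA unitary_tV // mul1mx. Qed.

Lemma peierls m (A S : 'M[C]_m) : psdmx A -> psdmx S -> \tr S = 1 -> cond A S ->
  expR (complex.Re (\tr (S *m mxln A))) <= complex.Re (\tr (S *m A)).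
Proof.
move=> hA hS tS c.
have hU := spectral_unitarymx A.
pose s k := complex.Re ((spectralmx A *m S *m (spectralmx A) ^t*) k k).
pose mu k := complex.Re (spectral_diag A 0 k).
have hs : forall k, (spectralmx A *m S *m (spectralmx A) ^t*) k k = toC (s k) /\ 0 <= s k.
  by move=> k; apply: ge0C; rewrite entry_quad; apply: hS.2.
have hd : forall k, spectral_diag A 0 k = toC (mu k) /\ 0 <= mu k.
  by move=> k; apply: ge0C; exact: spec_diag_ge0.
have e1 : complex.Re (\tr (S *m mxln A)) = \sum_k s k * ln (mu k).
  by rewrite tr_mxln Re_sum; apply: eq_bigr => k _; rewrite (hs k).1 Re_toCM.
have e2 : complex.Re (\tr (S *m A)) = \sum_k s k * mu k.
  by rewrite (tr_A _ hA.1) Re_sum; apply: eq_bigr => k _; rewrite (hs k).1 Re_toCM.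
rewrite e1 e2; apply: jensen_ln.
- by move=> k; exact: (hs k).2.
- by move=> k; exact: (hd k).2.
- move=> k mk; have dk : spectral_diag A 0 k = 0 by rewrite (hd k).1 mk.
  rewrite /s mxE big1 // => j _.
  by rewrite (cond_entry _ c dk) mul0r.
- have := congr1 (@complex.Re R) (tr_unitary_conj S hU).
  by rewrite tS /mxtrace Re_sum.
Qed.

Lemma supp_gen m (A S U : 'M[C]_m) (d : 'rV[C]_m) : U \is unitarymx ->
  A = U ^t* *m diag_mx d *m U -> (forall k j, d 0 k = 0 -> (U *m S) k j = 0) ->
  (S^T <= A^T)%MS.
Proof.
move=> hU -> ce.
pose Dp := diag_mx (\row_k (if d 0 k == 0 then 0 else (d 0 k)^-1)).
have key0 : forall W : 'M_m, (forall k j, d 0 k = 0 -> W k j = 0) ->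
    diag_mx d *m Dp *m W = W.
  move=> W hW; apply/matrixP => k j; rewrite mulmx_diag mul_diag_mx !mxE.
  case: (eqVneq (d 0 k) 0) => dk.
    by rewrite (hW k j dk) mulr0.
  by rewrite divff // mul1r.
have key : diag_mx d *m Dp *m (U *m S) = U *m S by apply: key0.
have eS : S = U ^t* *m diag_mx d *m U *m (U ^t* *m Dp *m U *m S).
  transitivity (U ^t* *m (diag_mx d *m Dp *m (U *m S))).
    by rewrite key mulmxA unitary_tV // mul1mx.
  have E : U ^t* *m diag_mx d *m U *m (U ^t* *m Dp *m U *m S) =
           U ^t* *m diag_mx d *m (U *m U ^t*) *m (Dp *m U *m S) by rewrite !mulmxA.
  by rewrite E (unitarymxP hU) mulmx1 !mulmxA.
by rewrite {1}eS trmx_mul submxMl.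
Qed.

Lemma supp_of_cond m (A S : 'M[C]_m) : A ^t* = A -> cond A S -> supp_sub S A.
Proof.
move=> h c; rewrite /supp_sub.
apply: (supp_gen (spectral_unitarymx A) (spec_dec h)) => k j dk.
exact: cond_entry.
Qed.

Lemma mxln_eigen m (A : 'M[C]_m) (v : 'cV[C]_m) (l : R) : A ^t* = A ->
  A *m v = toC l *: v -> mxln A *m v = toC (ln l) *: v.
Proof.
move=> h hv; have hU := spectral_unitarymx A.
have UA : spectralmx A *m A = diag_mx (spectral_diag A) *m spectralmx A.
  by rewrite -(spec_conj h) -[RHS]mulmxA unitary_tV // mulmx1.
set U := spectralmx A in hU UA *; set d := spectral_diag A in UA *.
have Dw : diag_mx d *m (U *m v) = toC l *: (U *m v).
  by rewrite mulmxA -UA -mulmxA hv scalemxAr.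
set w := U *m v in Dw *.
have wE : w = U *m v by [].
clearbody w.
have Lw : diag_mx (map_mx (fun z => toC (ln (complex.Re z))) d) *m w = toC (ln l) *: w.
  apply/matrixP => k j; rewrite ord1 mul_diag_mx !mxE.
  have := congr1 (fun M : 'cV[C]_m => M k 0) Dw; rewrite mul_diag_mx !mxE.
  case: (eqVneq (w k 0) 0) => [->|nz]; first by rewrite !mulr0.
  by move=> /(mulIf nz) ->.
rewrite /mxln -/U -/d -!mulmxA -wE Lw -scalemxAr wE mulmxA mulVmx ?mul1mx //.
exact: spectral_unit.
Qed.


Lemma quadE m (v : 'rV[C]_m) (A : 'M[C]_m) :
  (v *m A *m v ^t*) 0 0 = \sum_j \sum_k v 0 j * A j k * (v 0 k)^*.
Proof.
rewrite mxE; under eq_bigr do rewrite mxE mulr_suml.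
rewrite exchange_big /=; apply: eq_bigr => j _; apply: eq_bigr => k _.
by rewrite !mxE.
Qed.

Section Pos.
Variable n : nat.
Let f (a : 'I_n) : 'I_(1 * n) := mxtens_index (ord0, a).
Let g (u : 'I_(1 * n)) : 'I_n := (mxtens_unindex u).2.
Let gf a : g (f a) = a. Proof. by rewrite /g /f mxtens_indexK. Qed.
Let fg u : f (g u) = u.
Proof.
rewrite /f /g -{2}(mxtens_unindexK u); congr mxtens_index.
by case: (mxtens_unindex u) => x y /=; rewrite (ord1 x).
Qed.
Let sum1n (F : 'I_(1 * n) -> C) : \sum_u F u = \sum_a F (f a).
Proof. by rewrite (reindex f) //; exists g => [a _|u _]; [exact: gf | exact: fg]. Qed.

Lemma cp_pos (Phi : 'M[C]_n -> 'M[C]_n) : completely_positive Phi ->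
  forall Y, psdmx Y -> psdmx (Phi Y).
Proof.
move=> H Y [hY qY].
pose X : 'M[C]_(1 * n) := \matrix_(u, w) Y (g u) (g w).
have eA : ampl Phi X = \matrix_(u, w) Phi Y (g u) (g w).
  apply/matrixP => u w; rewrite !mxE; congr (Phi _ _ _).
  by apply/matrixP => a b; rewrite !mxE /g !mxtens_indexK.
have psdX : psdmx X.
  split.
    apply/matrixP => u w; rewrite !mxE.
    by have := congr1 (fun M : 'M[C]_n => M (g u) (g w)) hY; rewrite !mxE.
  move=> V; pose v : 'rV[C]_n := \row_a V 0 (f a).
  have := qY v; rewrite !quadE sum1n.
  under [in X in _ -> _ <= X]eq_bigr do rewrite sum1n.
  suff -> : \sum_a \sum_b V 0 (f a) * X (f a) (f b) * (V 0 (f b))^* =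
            \sum_j \sum_k v 0 j * Y j k * (v 0 k)^* by [].
  by apply: eq_bigr => a _; apply: eq_bigr => b _; rewrite !mxE !gf.
have [hA qA] := H 1%N X psdX; rewrite eA in hA qA.
split.
  apply/matrixP => a b.
  by have := congr1 (fun M : 'M[C]_(1 * n) => M (f a) (f b)) hA; rewrite !mxE !gf.
move=> v; pose V : 'rV[C]_(1 * n) := \row_u v 0 (g u).
have := qA V; rewrite !quadE sum1n.
under [in X in X -> _]eq_bigr do rewrite sum1n.
suff -> : \sum_a \sum_b V 0 (f a) * (\matrix_(u, w) Phi Y (g u) (g w)) (f a) (f b) * (V 0 (f b))^* =
          \sum_j \sum_k v 0 j * Phi Y j k * (v 0 k)^* by [].
by apply: eq_bigr => a _; apply: eq_bigr => b _; rewrite !mxE !gf.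
Qed.
End Pos.


Lemma gibbs r (a c : 'I_r -> R) : (forall i, 0 < a i) -> \sum_i a i = 1 ->
  0 < \sum_i expR (- c i) ->
  - ln (\sum_i expR (- c i)) <= \sum_i a i * c i + \sum_i a i * ln (a i).
Proof.
move=> a0 s1; set S := \sum_i expR (- c i) => S0.
have key : forall i, a i * (- c i - ln (a i) - ln S) <= expR (- c i) / S - a i.
  move=> i; have ai := a0 i; have xi := expR_gt0 (- c i).
  have q : 0 < expR (- c i) / (a i * S) by apply: divr_gt0 => //; apply: mulr_gt0.
  have e : ln (expR (- c i) / (a i * S)) = - c i - ln (a i) - ln S.
    by rewrite ln_div ?posrE ?mulr_gt0 // lnM ?posrE // expRK opprD addrA.
  have := @le_ln1Dx _ (expR (- c i) / (a i * S) - 1); rewrite [1 + _]addrC subrK e.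
  move=> /(_ ltac:(lra)) h.
  have := ler_wpM2l (ltW ai) h.
  have -> : a i * (expR (- c i) / (a i * S) - 1) = expR (- c i) / S - a i.
    by field; apply/andP; split; rewrite gt_eqF.
  by [].
have : \sum_i a i * (- c i - ln (a i) - ln S) <= \sum_i (expR (- c i) / S - a i).
  by apply: ler_sum => i _; exact: key.
have -> : \sum_i a i * (- c i - ln (a i) - ln S) =
          \sum_i (- (a i * c i) - a i * ln (a i) - ln S * a i).
  by apply: eq_bigr => i _; ring.
rewrite !sumrB sumrN -mulr_sumr s1 mulr1 -mulr_suml -/S divff ?gt_eqF // subrr.
lra.
Qed.


Lemma tr_sum m I (s : seq I) (F : I -> 'M[C]_m) :
  \tr (\sum_(i <- s) F i) = \sum_(i <- s) \tr (F i).
Proof.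
elim: s => [|a s IH]; first by rewrite !big_nil mxtrace0.
by rewrite !big_cons mxtraceD IH.
Qed.

Lemma mxtraceB m (A B : 'M[C]_m) : \tr (A - B) = \tr A - \tr B.
Proof.
rewrite mxtraceD; congr (_ + _); rewrite /mxtrace -sumrN.
by apply: eq_bigr => i _; rewrite mxE.
Qed.

Lemma quad_sum m I (s : seq I) (c : I -> C) (M : I -> 'M[C]_m) (v : 'rV[C]_m) :
  quad v (\sum_(i <- s) c i *: M i) = \sum_(i <- s) c i * quad v (M i).
Proof.
elim: s => [|a s IH]; first by rewrite !big_nil /quad mulmx0 mul0mx mxE.
rewrite !big_cons -IH /quad mulmxDr mulmxDl mxE; congr (_ + _).
by rewrite -scalemxAr -scalemxAl mxE.
Qed.

Lemma tr_psd_ge0 m (X A : 'M[C]_m) : psdmx X -> psdmx A ->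
  0 <= complex.Re (\tr (X *m A)).
Proof.
move=> hX hA; rewrite (tr_A _ hA.1) Re_sum; apply: sumr_ge0 => k _.
have h1 : 0 <= (spectralmx A *m X *m (spectralmx A) ^t*) k k.
  by rewrite entry_quad; exact: hX.2.
have [e1 g1] := ge0C h1; have [e2 g2] := ge0C (spec_diag_ge0 k hA).
by rewrite e1 e2 -rmorphM Re_toC; exact: mulr_ge0.
Qed.

End Q.

Unset Implicit Arguments.
Set Strict Implicit.

Theorem corollary1 (R : realType) (n r : nat)
  (Phi : {linear 'M[R[i]]_n -> 'M[R[i]]_n})
  (p : 'I_r -> R) (ket : 'I_r -> 'cV[R[i]]_n) :
  quantum_channel Phi -> unital Phi ->
  (forall i, 0 < p i <= 1) -> \sum_(i < r) p i = 1 ->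
  (forall i j, (ket i)^t* *m ket j = (i == j)%:R%:M) ->
  let rho_in := \sum_(i < r) (real_complex R (p i)) *: (ket i *m (ket i)^t*) in
  let rho_out := Phi rho_in in
  let DeltaS := vN_entropy rho_out - vN_entropy rho_in in
  let L_otm := (- lne (\sum_(i < r)
                   expeR (- cross_entropy (Phi (ket i *m (ket i)^t*)) rho_out)))%E in
  (L_otm <= DeltaS%:E)%E /\ (0 <= L_otm)%E.
Proof.
move=> [cp tp] un hp hsum orth rin rout dS L.
pose P i := ket i *m (ket i)^t*.
have rinE : rin = \sum_(i < r) (real_complex R (p i)) *: P i by [].
have psdP : forall i, psdmx (P i) by move=> i; exact: psd_MMt.
have p0 : forall i, 0 <= p i by move=> i; have /andP[/ltW] := hp i.
have psd_rin : psdmx rin by rewrite rinE; apply: psd_sum => i; apply: psdZ.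
have hpos := cp_pos cp.
have psd_sig : forall i, psdmx (Phi (P i)) by move=> i; exact: hpos.
have psd_rout : psdmx rout by exact: hpos.
have routE : rout = \sum_(i < r) real_complex R (p i) *: Phi (P i).
  by rewrite /rout rinE linear_sum; apply: eq_bigr => i _; rewrite linearZ.
have trP : forall i, \tr (P i) = 1.
  by move=> i; rewrite /P mxtrace_mulC orth eqxx mxtrace_scalar.
have trsig : forall i, \tr (Phi (P i)) = 1 by move=> i; rewrite tp.
have rin_ket : forall j, rin *m ket j = real_complex R (p j) *: ket j.
  move=> j; rewrite rinE mulmx_suml (bigD1 j) //= big1 ?addr0.
    by rewrite -scalemxAl -mulmxA orth eqxx mul_mx_scalar scale1r.
  move=> i ij; rewrite -scalemxAl -mulmxA orth (negbTE ij) mul_mx_scalar.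
  by rewrite scale0r scaler0.
have herm_rin : rin ^t* = rin := psd_rin.1.
have Lrin : forall j, mxln rin *m ket j = real_complex R (ln (p j)) *: ket j.
  by move=> j; exact: mxln_eigen herm_rin (rin_ket j).
have S_rin : complex.Re (\tr (rin *m mxln rin)) = \sum_i p i * ln (p i).
  rewrite {1}rinE mulmx_suml tr_sum Re_sum; apply: eq_bigr => i _.
  rewrite -scalemxAl mxtraceZ /P -mulmxA mxtrace_mulC -mulmxA Lrin -scalemxAr.
  by rewrite orth eqxx mxtraceZ mxtrace_scalar mulr1 Re_toCM.
have S_rout : complex.Re (\tr (rout *m mxln rout)) =
    \sum_i p i * complex.Re (\tr (Phi (P i) *m mxln rout)).
  rewrite {1}routE mulmx_suml tr_sum Re_sum; apply: eq_bigr => i _.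
  by rewrite -scalemxAl mxtraceZ Re_toCM.
have qsum : forall v, quad v rout = \sum_j real_complex R (p j) * quad v (Phi (P j)).
  by move=> v; rewrite routE quad_sum.
have hcond : forall i, cond rout (Phi (P i)).
  move=> i k dk.
  have hq : quad (row k (spectralmx rout)) rout = 0.
    by rewrite -entry_quad (spec_conj psd_rout.1) mxE eqxx mulr1n.
  move: hq; rewrite qsum => /eqP; rewrite psumr_eq0; last first.
    move=> j _; apply: mulr_ge0; first by rewrite toC_ge0.
    exact: (psd_sig j).2.
  move=> /allP /(_ i (mem_index_enum i)) /=; rewrite mulf_eq0 => /orP[|/eqP hq].
    by have /andP[pi _] := hp i; rewrite -(rmorph0 (real_complex R)) => /eqP /complexI /eqP; rewrite gt_eqF.
  by rewrite row_mul; exact: psd_kernel (psd_sig i) hq.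
have hsupp : forall i, supp_sub (Phi (P i)) rout.
  by move=> i; exact: supp_of_cond psd_rout.1 (hcond i).
have hpe : forall i, sequences.expR (complex.Re (\tr (Phi (P i) *m mxln rout)))
    <= complex.Re (\tr (Phi (P i) *m rout)).
  by move=> i; exact: peierls psd_rout (psd_sig i) (trsig i) (hcond i).
pose Pk := \sum_(i < r) P i.
have PkH : Pk ^t* = Pk by exact: (psd_sum _ (fun i => psdP i)).1.
have PkK : Pk *m Pk = Pk.
  rewrite /Pk mulmx_suml; apply: eq_bigr => i _; rewrite mulmx_sumr (bigD1 i) //= big1 ?addr0.
    by rewrite /P mulmxA -[ket i *m _ *m ket i]mulmxA orth eqxx mul_mx_scalar scale1r.
  move=> j ji; rewrite /P mulmxA -[ket i *m _ *m ket j]mulmxA orth eq_sym (negbTE ji).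
  by rewrite mul_mx_scalar scale0r mul0mx.
have psdQ : psdmx (1%:M - Pk).
  have -> : 1%:M - Pk = (1%:M - Pk) *m (1%:M - Pk) ^t*.
    rewrite linearB /= map_mxB trmx1 map_mx1 PkH.
    by rewrite mulmxBl !mulmxBr !mul1mx PkK mulmx1 subrr subr0.
  exact: psd_MMt.
have e1 : Phi (1%:M - Pk) = 1%:M - \sum_i Phi (P i) by rewrite linearB /= un linear_sum.
have trge := tr_psd_ge0 (hpos _ psdQ) psd_rout.
have trrout : complex.Re (\tr rout) = 1.
  rewrite routE tr_sum Re_sum -hsum; apply: eq_bigr => i _.
  by rewrite mxtraceZ trsig mulr1.
rewrite e1 mulmxBl mul1mx mulmx_suml mxtraceB tr_sum ReD ReN trrout Re_sum in trge.
pose c i := - complex.Re (\tr (Phi (P i) *m mxln rout)).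
have hS : \sum_i sequences.expR (- c i) <= 1.
  apply: (@le_trans _ _ (\sum_i complex.Re (\tr (Phi (P i) *m rout)))); last by rewrite subr_ge0 in trge.
  by apply: ler_sum => i _; rewrite /c opprK; exact: hpe.
have [i0 _] : exists i : 'I_r, True.
  case: (pickP (fun _ : 'I_r => true)) => [i _|none]; first by exists i.
  move: hsum; rewrite big1 // => [/eqP|i _]; first by rewrite eq_sym oner_eq0.
  by have := none i.
have Spos : 0 < \sum_i sequences.expR (- c i).
  rewrite (bigD1 i0) //=; apply: ltr_wpDr; last exact: expR_gt0.
  by apply: sumr_ge0 => i _; exact: expR_ge0.
have eL : L = (- ln (\sum_i sequences.expR (- c i)))%:E.
  rewrite /L.
  have -> : \sum_(i < r) expeR (- cross_entropy (Phi (ket i *m (ket i)^t*)) rout)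
      = (\sum_i sequences.expR (- c i))%:E.
    rewrite -sumEFin; apply: eq_bigr => i _; rewrite /cross_entropy (hsupp i).
    by rewrite -EFinN /= /c /P.
  by rewrite lne_EFin.
have edS : dS = \sum_i p i * c i + \sum_i p i * ln (p i).
  change dS with (- complex.Re (\tr (rout *m mxln rout)) - - complex.Re (\tr (rin *m mxln rin))).
  transitivity (- (\sum_i p i * complex.Re (\tr (Phi (P i) *m mxln rout))) - - \sum_i p i * ln (p i)).
    by congr (- _ - - _); [exact: S_rout | exact: S_rin].
  rewrite opprK; congr (_ + _).
  rewrite -sumrN; apply: eq_bigr => i _; rewrite /c mulrN //.
rewrite eL edS; split.
- rewrite lee_fin; apply: gibbs => //.
  by move=> i; case/andP: (hp i).
- by rewrite lee_fin oppr_ge0; exact: ln_le0.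
Qed.
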